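(* Let $\mathscr C$ be a small permutative category and let $X^{(1)},\dots,X^{(m)}\in\Phi(\mathscr C)$. Then: (1) there exists an $X^\bullet$-monotone injection $\phi\colon\mathbf m\times\omega\to\omega$; (2) if $\phi,\phi'\colon\mathbf m\times\omega\to\omega$ are two $X^\bullet$-monotone injections, then $\bigotimes_{i\in\omega}(\phi_*(X^\bullet))_i=\bigotimes_{i\in\omega}(\phi'_*(X^\bullet))_i$ in $\mathscr C$, and the morphism $[\phi',\phi]_{X^\bullet}\colon\phi_*(X^\bullet)\to\phi'_*(X^\bullet)$ in $\Phi(\mathscr C)$ is given by the identity morphism of this object of $\mathscr C$.
   Context: A permutative category is a symmetric monoidal category $(\mathscr C,\otimes,\mathbf 1,\tau)$ whose associativity and unit isomorphisms are identities; for $\sigma\in\Sigma_K$, the coherence isomorphism $\bigotimes_{i=1}^KA_i\to\bigotimes_{i=1}^KA_{\sigma^{-1}(i)}$ is the composite of maps $\mathrm{id}\otimes\tau\otimes\mathrm{id}$ along a decomposition of $\sigma$ into adjacent transpositions. Let $\omega=\{1,2,\dots\}$, $\mathbf m=\{1,\dots,m\}$, $\mathcal M$ the monoid of injections $\omega\to\omega$. $\Phi(\mathscr C)$ is the parsummable category whose objects are sequences $X=(X_1,X_2,\dots)$ of objects of $\mathscr C$ with $X_i=\mathbf 1$ for almost all $i$; $\mathrm{Hom}(X,Y)=\mathrm{Hom}_{\mathscr C}(\bigotimes_{i\in\omega}X_i,\bigotimes_{i\in\omega}Y_i)$ (ordered tensor product of non-unit entries; a morphism is a morphism of $\mathscr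 C$ together with its source and target); $(u_*X)_i=X_j$ if $i=u(j)$ and $\mathbf 1$ if $i\notin\mathrm{im}(u)$; the structure isomorphism $[u,1]_X\colon X\to u_*X$ is the coherence isomorphism associated to any $\sigma\in\Sigma_K$ with $\sigma(i)=u(i)$ for all $i\le K$ with $X_i\ne\mathbf1$, where $X_i=\mathbf 1=(u_*X)_i$ for $i>K$, and $[v,u]_X=[v,1]_X\circ[u,1]_X^{-1}$; $\mathrm{supp}(X)=\{i:X_i\ne\mathbf 1\}$; the sum of disjointly supported $X,Y$ has entries $X_i$ for $i\in\mathrm{supp}(X)$ and $Y_i$ otherwise, and sums of morphisms are $f\otimes g$ conjugated by the coherence isomorphisms rearranging entries. For a finite set $A$, injections $\phi,\phi'\colon A\times\omega\to\omega$ and a family $(X^{(a)})_{a\in A}$ of objects, $\phi_*(X^\bullet)=\sum_a\phi(a,-)_*(X^{(a)})$ and $[\phi',\phi]_{X^\bullet}=\sum_a[\phi'(a,-),\phi(a,-)]_{X^{(a)}}$. An injection $\phi\colon\mathbf m\times\omega\to\omega$ is $X^\bullet$-monotone if $\phi(i,j)<\phi(i',j')$ for all $i,i'\in\mathbf m$, $j,j'\in\omega$ with $(i,j)$ lexicographically smaller than $(i',j')$ and $X^{(i)}_j\ne\mathbf 1\ne X^{(i')}_{j'}$. *)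

(* Defs.v *)
From Stdlib Require Import ClassicalEpsilon.
From mathcomp Require Import all_boot.

Set Implicit Arguments.
Unset Strict Implicit.
Unset Printing Implicit Defensive.

(* Permutative categories (strict symmetric monoidal categories),      *)
(* presented single-sorted: a type of objects, a type of morphisms     *)
(* with source and target, identities and composition.                 *)
(* [comp g f] is g \o f (meaningful when tgt f = src g).               *)
Record permcat := PermCat {
  Ob : Type;
  Mor : Type;
  src : Mor -> Ob;
  tgt : Mor -> Ob;
  idm : Ob -> Mor;
  comp : Mor -> Mor -> Mor;
  tens : Ob -> Ob -> Ob;
  tensm : Mor -> Mor -> Mor;
  unit : Ob;
  tau : Ob -> Ob -> Mor;
  src_idm : forall A, src (idm A) = A;
  tgt_idm : forall A, tgt (idm A) = A;
  src_comp : forall f g, tgt f = src g -> src (comp g f) = src f;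
  tgt_comp : forall f g, tgt f = src g -> tgt (comp g f) = tgt g;
  comp_idl : forall f, comp (idm (tgt f)) f = f;
  comp_idr : forall f, comp f (idm (src f)) = f;
  compA : forall f g h, tgt f = src g -> tgt g = src h ->
            comp h (comp g f) = comp (comp h g) f;
  src_tensm : forall f g, src (tensm f g) = tens (src f) (src g);
  tgt_tensm : forall f g, tgt (tensm f g) = tens (tgt f) (tgt g);
  tensm_idm : forall A B, tensm (idm A) (idm B) = idm (tens A B);
  tensm_comp : forall f f' g g', tgt f = src f' -> tgt g = src g' ->
            tensm (comp f' f) (comp g' g) = comp (tensm f' g') (tensm f g);
  tensA : forall A B D, tens (tens A B) D = tens A (tens B D);
  tensmA : forall f g h, tensm (tensm f g) h = tensm f (tensm g h);
  tens1l : forall A, tens unit A = A;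
  tens1r : forall A, tens A unit = A;
  tensm1l : forall f, tensm (idm unit) f = f;
  tensm1r : forall f, tensm f (idm unit) = f;
  src_tau : forall A B, src (tau A B) = tens A B;
  tgt_tau : forall A B, tgt (tau A B) = tens B A;
  tau_nat : forall f g, comp (tau (tgt f) (tgt g)) (tensm f g)
                      = comp (tensm g f) (tau (src f) (src g));
  tau_inv : forall A B, comp (tau B A) (tau A B) = idm (tens A B);
  tau_hex : forall A B D,
      tau A (tens B D) = comp (tensm (idm B) (tau A D)) (tensm (tau A B) (idm D))
}.

Section Phi.
Variable C : permcat.
Local Notation Ob := (Ob C).
Local Notation Mor := (Mor C).
Local Notation one := (unit C).

Definition is_unit (A : Ob) : bool :=
  if excluded_middle_informative (A = one) then true else false.

Definition tensl (s : seq Ob) : Ob := foldr (@tens C) one s.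

Definition tup (X : nat -> Ob) (K : nat) : Ob := tensl (map X (iota 0 K)).

(* Objects of Phi(C): sequences with X_i = 1 for almost all i. *)
Definition supp_bound (X : nat -> Ob) (K : nat) : Prop :=
  forall i, K <= i -> X i = one.
Definition finsupp (X : nat -> Ob) : Prop := exists K, supp_bound X K.

(* \bigotimes_{i in omega} X_i : ordered tensor of the entries below a
   bound of the support (equal to the ordered tensor of the non-unit
   entries, since the unit is strict). *)
Definition bigtens (X : nat -> Ob) : Ob :=
  tup X (epsilon (inhabits 0%N) (supp_bound X)).

Definition pushf (u : nat -> nat) (X : nat -> Ob) (i : nat) : Ob :=
  match excluded_middle_informative (exists j, u j = i) with
  | left H => X (proj1_sig (constructive_indefinite_description _ H))
  | right _ => one
  end.

(* A permutation sigma of {0..K-1} is encoded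
   by the list p = [sigma^-1(0); ...; sigma^-1(K-1)], so that the target
   of the coherence iso is tensl (map X p) = (x)_i X_(sigma^-1 i). *)
Definition swapk (k : nat) (p : seq nat) : seq nat :=
  take k p ++ [:: nth 0 p k.+1; nth 0 p k] ++ drop k.+2 p.

Definition adjm (s : seq Ob) (k : nat) : Mor :=
  tensm (idm (tensl (take k s)))
        (tensm (tau (nth one s k) (nth one s k.+1)) (idm (tensl (drop k.+2 s)))).

(* [coh X K p f]: f is the composite of maps id (x) tau (x) id along some
   decomposition into adjacent transpositions of the permutation encoded
   by p, applied to X_0 (x) ... (x) X_(K-1). *)
Inductive coh (X : nat -> Ob) (K : nat) : seq nat -> Mor -> Prop :=
| coh0 : coh X K (iota 0 K) (idm (tup X K))
| cohS p f k : coh X K p f -> k.+1 < K ->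
    coh X K (swapk k p) (comp (adjm (map X p) k) f).

Definition inv (f : Mor) : Mor :=
  epsilon (inhabits f)
    (fun g => comp g f = idm (src f) /\ comp f g = idm (tgt f)).

(* [u,1]_X : X -> u_* X *)
Definition bracket1 (u : nat -> nat) (X : nat -> Ob) : Mor :=
  epsilon (inhabits (idm one)) (fun f => exists K (p : seq nat),
    (forall i, K <= i -> X i = one /\ pushf u X i = one) /\
    (forall j, j < K -> X j <> one -> u j < K /\ nth 0 p (u j) = j) /\
    coh X K p f).

Definition bracket (v u : nat -> nat) (X : nat -> Ob) : Mor :=
  comp (bracket1 v X) (inv (bracket1 u X)).

Variable m : nat.

Definition famsum (Xs : 'I_m -> nat -> Ob) (i : nat) : Ob :=
  match excluded_middle_informative (exists a, Xs a i <> one) with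
  | left H => Xs (proj1_sig (constructive_indefinite_description _ H)) i
  | right _ => one
  end.

(* rearrangement of the entries below K: first the entries of Xs 0, then
   those of Xs 1, ..., then the unit entries (each block in order) *)
Definition sum_perm (Xs : 'I_m -> nat -> Ob) (K : nat) : seq nat :=
  flatten [seq [seq i <- iota 0 K | ~~ is_unit (Xs a i)] | a <- enum 'I_m]
  ++ [seq i <- iota 0 K | [forall a, is_unit (Xs a i)]].

(* coherence iso (x)(sum_a X^(a)) -> (x)X^(0) (x) ... (x) (x)X^(m-1) *)
Definition rho (Xs : 'I_m -> nat -> Ob) : Mor :=
  epsilon (inhabits (idm one)) (fun f => exists K,
    (forall a i, K <= i -> Xs a i = one) /\ coh (famsum Xs) K (sum_perm Xs K) f).

Definition tensfam (fs : 'I_m -> Mor) : Mor :=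
  foldr (fun a acc => tensm (fs a) acc) (idm one) (enum 'I_m).

Definition summor (Xs Ys : 'I_m -> nat -> Ob) (fs : 'I_m -> Mor) : Mor :=
  comp (inv (rho Ys)) (comp (tensfam fs) (rho Xs)).

Definition phipush (phi : 'I_m * nat -> nat) (Xs : 'I_m -> nat -> Ob) :
  nat -> Ob := famsum (fun a => pushf (fun j => phi (a, j)) (Xs a)).

Definition bracket_fam (phi' phi : 'I_m * nat -> nat) (Xs : 'I_m -> nat -> Ob)
  : Mor :=
  summor (fun a => pushf (fun j => phi (a, j)) (Xs a))
         (fun a => pushf (fun j => phi' (a, j)) (Xs a))
         (fun a => bracket (fun j => phi' (a, j)) (fun j => phi (a, j)) (Xs a)).

Definition lex_lt (x y : 'I_m * nat) : bool :=
  (x.1 < y.1) || ((x.1 == y.1) && (x.2 < y.2)).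

Definition monotone (Xs : 'I_m -> nat -> Ob) (phi : 'I_m * nat -> nat) : Prop :=
  forall x y : 'I_m * nat, lex_lt x y ->
    Xs x.1 x.2 <> one -> Xs y.1 y.2 <> one -> phi x < phi y.

End Phi.

(* Main.v *)
Require Import Defs.
From Stdlib Require Import ClassicalEpsilon.
From mathcomp Require Import all_boot zify.
Set Implicit Arguments. Unset Strict Implicit. Unset Printing Implicit Defensive.

Lemma sorted_charac (P : pred nat) K l : sorted ltn l ->
  (forall i, (i \in l) = (i < K) && P i) -> filter P (iota 0 K) = l.
Proof.
move=> Hs Hm; apply: (irr_sorted_eq ltn_trans ltnn) => //.
  by apply: sorted_filter => //; [exact: ltn_trans | exact: iota_ltn_sorted].
by move=> i; rewrite mem_filter mem_iota Hm add0n andbC.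
Qed.

Lemma map_index_self (w : seq nat) : uniq w -> map (index^~ w) w = iota 0 (size w).
Proof.
move=> Hw; apply: (@eq_from_nth _ 0); rewrite ?size_map ?size_iota // => i Hi.
by rewrite (nth_map 0) // nth_iota // add0n index_uniq.
Qed.

Lemma p_construct (K : nat) (nu : pred nat) (u : nat -> nat) : injective u ->
  (forall j, j < K -> nu j -> u j < K) ->
  exists p, perm_eq (iota 0 K) p /\ forall j, j < K -> nu j -> nth 0 p (u j) = j.
Proof.
move=> Hu HK.
set S := filter nu (iota 0 K).
set s1 := S ++ filter (predC nu) (iota 0 K).
set P := map u S.
set w := P ++ filter (predC (mem P)) (iota 0 K).
have PK : forall x, x \in P -> x < K.
  by move=> x /mapP [j]; rewrite mem_filter mem_iota add0n => /andP [H1 /andP [_ H2]] ->; apply: HK.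
have Hw : perm_eq w (iota 0 K).
  apply: uniq_perm.
  - rewrite cat_uniq (map_inj_uniq Hu) filter_uniq ?iota_uniq // andbT /=.
    rewrite filter_uniq ?iota_uniq //=; apply/hasPn => x; rewrite mem_filter /= => /andP [] ? _ //.
  - exact: iota_uniq.
  - move=> x; rewrite mem_cat mem_filter mem_iota add0n /=.
    by case E: (x \in P) => //=; rewrite (PK _ E).
have Hsw : size w = K by rewrite (perm_size Hw) size_iota.
have Hs1 : perm_eq s1 (iota 0 K) by rewrite /s1 /S perm_filterC.
have Hss1 : size s1 = K by rewrite (perm_size Hs1) size_iota.
exists (map (fun i => nth 0 s1 (index i w)) (iota 0 K)); split.
- rewrite perm_sym (map_comp (nth 0 s1) (index^~ w)).
  apply: (@perm_trans _ (map (nth 0 s1) (iota 0 K))).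
    apply: perm_map.
    have := perm_map (index^~ w) Hw.
    rewrite map_index_self ?(perm_uniq Hw) ?iota_uniq // Hsw perm_sym => H; exact: H.
  by rewrite map_nth_iota0 ?Hss1 // take_oversize ?Hss1.
- move=> j Hj Hnj.
  have jS : j \in S by rewrite mem_filter Hnj mem_iota.
  have ujP : u j \in P by apply: map_f.
  rewrite (nth_map 0) ?size_iota ?HK // nth_iota ?HK // add0n.
  rewrite index_cat ujP index_map //.
  by rewrite nth_cat index_mem jS nth_index.
Qed.

Section Gen.
Variable P : seq nat -> Prop.
Hypothesis HP : forall L a b R, P (L ++ a :: b :: R) -> P (L ++ b :: a :: R).

Lemma mv x L R : P (L ++ x :: R) -> P (x :: L ++ R).
Proof.
elim/last_ind: L R => [|L y IH] R //.
rewrite cat_rcons => H.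
have := IH (y :: R) (HP H). by rewrite cat_rcons.
Qed.
End Gen.

Lemma gen t : forall (P : seq nat -> Prop),
  (forall L a b R, P (L ++ a :: b :: R) -> P (L ++ b :: a :: R)) ->
  forall s, P s -> perm_eq s t -> P t.
Proof.
elim: t => [|x t IH] P HP s Ps Hp.
  by move/perm_nilP: Hp => <-.
have xs : x \in s by rewrite (perm_mem Hp) mem_head.
have [L [R [Es _]]] : exists L R, s = L ++ x :: R /\ true.
  exists (take (index x s) s), (drop (index x s).+1 s); split => //.
  by rewrite -{1}(cat_take_drop (index x s) s) (drop_nth 0) ?index_mem // nth_index.
subst s.
have H1 := mv HP Ps.
have H2 : perm_eq (x :: t) (L ++ x :: R) by rewrite perm_sym.
have H3 : perm_eq (L ++ x :: R) (x :: (L ++ R)) by rewrite -cat1s perm_catCA.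
apply: (IH (fun l => P (x :: l)) _ (L ++ R) H1).
  by move=> L' a b R'; apply: (HP (x :: L')).
by have := perm_trans H2 H3; rewrite perm_cons perm_sym.
Qed.

Section Cat.
Variable C : permcat.
Local Notation Ob := (Ob C).
Local Notation Mor := (Mor C).
Local Notation one := (unit C).
Local Notation tens := (@tens C).
Local Notation tensm := (@tensm C).
Local Notation comp := (@Defs.comp C).
Local Notation idm := (@idm C).
Local Notation tau := (@tau C).
Local Notation tensl := (@tensl C).

Lemma comp_idl' f A : tgt f = A -> comp (idm A) f = f.
Proof. by move=> <-; rewrite comp_idl. Qed.
Lemma comp_idr' f A : src f = A -> comp f (idm A) = f.
Proof. by move=> <-; rewrite comp_idr. Qed.

Lemma tau_A1 A : tau A one = idm A.
Proof.
have H := tau_hex A one one.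
rewrite tens1l tensm1l tensm1r in H.
have Hi := tau_inv A one. rewrite tens1r in Hi.
have E : comp (tau one A) (comp (tau A one) (tau A one)) = comp (comp (tau one A) (tau A one)) (tau A one).
  by apply: Defs.compA; rewrite ?tgt_tau ?src_tau ?tens1l ?tens1r.
rewrite -H Hi comp_idl' in E => //.
by rewrite tgt_tau tens1l.
Qed.

Lemma tau_1A A : tau one A = idm A.
Proof.
have Hi := tau_inv A one. rewrite tau_A1 tens1r in Hi.
by rewrite -Hi comp_idr' // src_tau tens1l.
Qed.

Lemma comp_idm A : comp (idm A) (idm A) = idm A.
Proof. by rewrite -{1}(tgt_idm A) comp_idl. Qed.

Lemma tensl_cat s1 s2 : tensl (s1 ++ s2) = tens (tensl s1) (tensl s2).
Proof. elim: s1 => [|a s IH] /=; by rewrite ?tens1l // /tensl /= -/(tensl _) IH tensA. Qed.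


Lemma idm_tens A B : idm (tens A B) = tensm (idm A) (idm B).
Proof. by rewrite tensm_idm. Qed.

Lemma TC f f' g g' : tgt f = src f' -> tgt g = src g' ->
  comp (tensm f' g') (tensm f g) = tensm (comp f' f) (comp g' g).
Proof. by move=> H1 H2; rewrite tensm_comp. Qed.

Lemma CA f g h : tgt f = src g -> tgt g = src h ->
  comp h (comp g f) = comp (comp h g) f.
Proof. exact: Defs.compA. Qed.

Lemma tau_nat2 A g : comp (tau A (tgt g)) (tensm (idm A) g) = comp (tensm g (idm A)) (tau A (src g)).
Proof. by have := tau_nat (idm A) g; rewrite tgt_idm src_idm. Qed.

Variable X : nat -> Ob.
Definition obs (s : seq nat) := tensl (map X s).
Lemma obs_nil : obs [::] = one. Proof. by []. Qed.
Lemma obs_cons x s : obs (x :: s) = tens (X x) (obs s). Proof. by []. Qed.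
Lemma obs_cat s1 s2 : obs (s1 ++ s2) = tens (obs s1) (obs s2).
Proof. by rewrite /obs map_cat tensl_cat. Qed.

Fixpoint can (s t : seq nat) : Mor :=
  match s with
  | [::] => idm one
  | x :: s' => comp (tensm (tau (X x) (obs (take (index x t) t))) (idm (obs (drop (index x t).+1 t))))
                    (tensm (idm (X x)) (can s' (rem x t)))
  end.

Lemma rem_pivot (x : nat) L R : x \notin L -> rem x (L ++ x :: R) = L ++ R.
Proof.
elim: L => [|y L IH] /=; first by rewrite eqxx.
rewrite inE negb_or => /andP [H1 H2]; by rewrite eq_sym (negbTE H1) IH.
Qed.

Lemma can_cons x s' L R : x \notin L ->
  can (x :: s') (L ++ x :: R) =
  comp (tensm (tau (X x) (obs L)) (idm (obs R))) (tensm (idm (X x)) (can s' (L ++ R))).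
Proof.
move=> H /=. rewrite take_pivot // index_pivot // rem_pivot //.
by rewrite drop_cat ltnNge leqnSn /= subSn // subnn /= drop0.
Qed.

Lemma split_mem (x : nat) t : x \in t -> exists L R, t = L ++ x :: R /\ x \notin L.
Proof.
move=> H; exists (take (index x t) t), (drop (index x t).+1 t); split.
  by rewrite -{1}(cat_take_drop (index x t) t) (drop_nth 0) ?index_mem // nth_index.
by rewrite in_take // ltnn.
Qed.


Lemma perm_pivot (x : nat) s' L R : perm_eq (x :: s') (L ++ x :: R) -> perm_eq s' (L ++ R).
Proof.
move=> H. have H2 : perm_eq (L ++ x :: R) (x :: (L ++ R)).
  by rewrite -cat1s perm_catCA.
by rewrite -(perm_cons x) (perm_trans H H2).
Qed.

Lemma can_typ s t : perm_eq s t -> src (can s t) = obs s /\ tgt (can s t) = obs t.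
Proof.
elim: s t => [|x s' IH] t Hp.
  by rewrite perm_sym in Hp; move/perm_nilP: Hp => ->; rewrite /= src_idm tgt_idm.
have xt : x \in t by rewrite -(perm_mem Hp) mem_head.
have [L [R [Et xL]]] := split_mem xt. subst t.
have [H1 H2] := IH _ (perm_pivot Hp).
rewrite can_cons //.
have Ht : tgt (tensm (idm (X x)) (can s' (L ++ R))) = src (tensm (tau (X x) (obs L)) (idm (obs R))).
  by rewrite tgt_tensm src_tensm tgt_idm H2 src_tau src_idm obs_cat tensA.
rewrite src_comp // tgt_comp // src_tensm tgt_tensm src_idm H1 tgt_tau tgt_idm.
by rewrite obs_cat obs_cons obs_cons tensA.
Qed.

Lemma can_src s t : perm_eq s t -> src (can s t) = obs s.
Proof. by case/can_typ. Qed.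
Lemma can_tgt s t : perm_eq s t -> tgt (can s t) = obs t.
Proof. by case/can_typ. Qed.

Lemma can_id s : can s s = idm (obs s).
Proof.
elim: s => [|x s IH] //=.
rewrite eqxx /= drop0 IH obs_nil tau_A1 -!idm_tens obs_cons.
by rewrite comp_idm.
Qed.


Ltac typ := repeat progress rewrite ?src_tensm ?tgt_tensm ?src_tau ?tgt_tau ?src_idm ?tgt_idm ?obs_cat ?obs_cons ?obs_nil ?tensA ?tens1l ?tens1r ?tensA.

Definition adj L a b R := tensm (idm (obs L)) (tensm (tau (X a) (X b)) (idm (obs R))).
Lemma adj_src L a b R : src (adj L a b R) = obs (L ++ a :: b :: R).
Proof. by rewrite /adj; typ. Qed.
Lemma adj_tgt L a b R : tgt (adj L a b R) = obs (L ++ b :: a :: R).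
Proof. by rewrite /adj; typ. Qed.

Lemma tensm_compl f f' B : tgt f = src f' ->
  tensm (comp f' f) (idm B) = comp (tensm f' (idm B)) (tensm f (idm B)).
Proof. by move=> H; rewrite -tensm_comp // ?comp_idm // tgt_idm src_idm. Qed.
Lemma tensm_compr f f' A : tgt f = src f' ->
  tensm (idm A) (comp f' f) = comp (tensm (idm A) f') (tensm (idm A) f).
Proof. by move=> H; rewrite -tensm_comp // ?comp_idm // tgt_idm src_idm. Qed.

Lemma xch1 f g A B' : src f = A -> tgt g = B' ->
  comp (tensm f (idm B')) (tensm (idm A) g) = tensm f g.
Proof.
move=> <- <-; rewrite TC ?tgt_idm ?src_idm // comp_idr comp_idl' //.
Qed.
Lemma xch2 f g A' B : tgt f = A' -> src g = B ->
  comp (tensm (idm A') g) (tensm f (idm B)) = tensm f g.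
Proof.
move=> <- <-; rewrite TC ?tgt_idm ?src_idm // comp_idl comp_idr' //.
Qed.


Lemma uniq2 (L : seq nat) a b R : uniq (L ++ a :: b :: R) -> [/\ a \notin L, b \notin L & a != b].
Proof.
rewrite cat_uniq => /and3P [_ H1 H2].
move: H1 H2 => /hasPn H1 /andP [H2 _]. split.
- by apply: H1; rewrite inE eqxx.
- by apply: H1; rewrite !inE eqxx orbT.
- by apply/negP => /eqP E; move: H2; rewrite E inE eqxx.
Qed.

Lemma adj_inv L a b R : comp (adj L a b R) (adj L b a R) = idm (obs (L ++ b :: a :: R)).
Proof.
rewrite /adj TC; try by typ.
rewrite TC; try by typ.
by rewrite tau_inv !comp_idm -!idm_tens obs_cat obs_cons obs_cons tensA.
Qed.

Lemma can_swap s L a b R : uniq (L ++ a :: b :: R) -> perm_eq s (L ++ a :: b :: R) ->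
  can s (L ++ b :: a :: R) = comp (adj L a b R) (can s (L ++ a :: b :: R)).
Proof.
elim: s L a b R => [|x s' IH] L a b R Hu Hp.
  by have := perm_size Hp; rewrite size_cat /= addnS.
have xt : x \in L ++ a :: b :: R by rewrite -(perm_mem Hp) mem_head.
rewrite mem_cat !inE in xt.
case/orP: xt => [xL|/or3P [/eqP xa|/eqP xb|xR]].
- have [L1 [L2 [EL xL1]]] := split_mem xL. subst L.
  have E1 : (L1 ++ x :: L2) ++ a :: b :: R = L1 ++ x :: (L2 ++ a :: b :: R) by rewrite -catA.
  have E2 : (L1 ++ x :: L2) ++ b :: a :: R = L1 ++ x :: (L2 ++ b :: a :: R) by rewrite -catA.
  have Hp' : perm_eq s' ((L1 ++ L2) ++ a :: b :: R) by rewrite -catA; apply: (@perm_pivot x); rewrite -E1.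
  have Hu' : uniq ((L1 ++ L2) ++ a :: b :: R) by rewrite -catA -(rem_pivot _ xL1) rem_uniq // -E1.
  rewrite E1 E2 !can_cons //.
  have := IH (L1 ++ L2) a b R Hu' Hp'; rewrite -!catA => ->.
  have [Hcs Hct] := can_typ Hp'. rewrite -catA in Hct.
  have Eadj : adj (L1 ++ L2) a b R = tensm (idm (obs L1)) (adj L2 a b R) by rewrite /adj obs_cat idm_tens tensmA.
  have Eadj2 : adj (L1 ++ x :: L2) a b R = tensm (idm (tens (obs L1) (X x))) (adj L2 a b R) by rewrite /adj obs_cat obs_cons !idm_tens !tensmA.
  rewrite tensm_compr; last by rewrite Hct adj_src -catA.
  rewrite Eadj Eadj2 -(tensmA (idm (X x))) -(idm_tens (X x)).
  rewrite CA; last by typ; rewrite ?Hct ?adj_src ?adj_tgt; typ.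
  2: by typ; rewrite ?Hct ?adj_src ?adj_tgt; typ.
  rewrite [in RHS]CA; last by typ; rewrite ?Hct ?adj_src ?adj_tgt; typ.
  2: by typ; rewrite ?Hct ?adj_src ?adj_tgt; typ.
  rewrite xch1 ?src_tau ?adj_tgt // xch2 ?tgt_tau ?adj_src //.
- subst x.
  have [aL _ ab] := uniq2 Hu.
  have E2 : L ++ b :: a :: R = (L ++ [:: b]) ++ a :: R by rewrite -catA.
  have aLb : a \notin L ++ [:: b] by rewrite mem_cat inE negb_or aL ab.
  rewrite E2 !can_cons // -catA /=.
  have Hp' := perm_pivot Hp.
  have [Hcs Hct] := can_typ Hp'.
  rewrite obs_cat obs_cons obs_nil tens1r tau_hex tensm_compl; last by typ.
  rewrite !tensmA -/(adj L a b R) obs_cons idm_tens.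
  by rewrite [in RHS]CA //; typ; rewrite ?Hct; typ.
- subst x.
  have [_ bL ab] := uniq2 Hu.
  have E1 : L ++ a :: b :: R = (L ++ [:: a]) ++ b :: R by rewrite -catA.
  have bLa : b \notin L ++ [:: a] by rewrite mem_cat inE negb_or bL eq_sym ab.
  rewrite E1 !can_cons // -catA /=.
  have Hp' : perm_eq s' (L ++ a :: R) by move: Hp; rewrite E1 => /(@perm_pivot b); rewrite -catA.
  have [Hcs Hct] := can_typ Hp'.
  rewrite obs_cat !obs_cons obs_nil tens1r tau_hex tensm_compl; last by typ.
  rewrite !tensmA idm_tens.
  rewrite [in RHS]CA; try (by typ; rewrite ?Hct; typ).
  rewrite [in RHS]CA; try (by typ; rewrite ?Hct; typ).
  rewrite -/(adj L b a R) adj_inv comp_idl'; first by [].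
  all: (repeat (rewrite src_comp || rewrite tgt_comp)); typ; rewrite ?Hct; typ; try done.
- have [R1 [R2 [ER xR1]]] := split_mem xR. subst R.
  have xP : x \notin L ++ a :: b :: R1.
    have E : L ++ a :: b :: R1 ++ x :: R2 = (L ++ a :: b :: R1) ++ x :: R2 by rewrite -catA.
    by move: Hu; rewrite E cat_uniq /= negb_or => /and3P [_ /andP [] ].
  have E1 : L ++ a :: b :: R1 ++ x :: R2 = (L ++ a :: b :: R1) ++ x :: R2 by rewrite -catA.
  have E2 : L ++ b :: a :: R1 ++ x :: R2 = (L ++ b :: a :: R1) ++ x :: R2 by rewrite -catA.
  have xP' : x \notin L ++ b :: a :: R1.
    by move: xP; rewrite !mem_cat !inE; case: (x \in L); case: (x == a); case: (x == b).
  have Hp' : perm_eq s' (L ++ a :: b :: R1 ++ R2).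
    move: Hp; rewrite E1 => /(@perm_pivot x). by rewrite -catA.
  have Hu' : uniq (L ++ a :: b :: R1 ++ R2).
    have := rem_uniq x Hu; rewrite E1 rem_pivot //; by rewrite -catA.
  rewrite E1 E2 !can_cons //.
  have := IH L a b (R1 ++ R2) Hu' Hp'. rewrite -!catA /= => ->.
  have [Hcs Hct] := can_typ Hp'.
  have Eadj : adj L a b (R1 ++ R2) = tensm (adj L a b R1) (idm (obs R2)) by rewrite /adj obs_cat !idm_tens !tensmA.
  have Eadj2 : adj L a b (R1 ++ x :: R2) = tensm (tensm (adj L a b R1) (idm (X x))) (idm (obs R2)) by rewrite /adj obs_cat obs_cons !idm_tens !tensmA.
  rewrite tensm_compr; last by rewrite Hct adj_src.
  rewrite Eadj Eadj2 -(tensmA (idm (X x))).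
  rewrite CA; last by typ; rewrite ?Hct ?adj_src ?adj_tgt; typ.
  rewrite CA; try (by typ; rewrite ?Hct ?adj_src ?adj_tgt; typ).
  rewrite TC; try (by typ; rewrite ?Hct ?adj_src ?adj_tgt; typ).
  rewrite [in RHS]TC; try (by typ; rewrite ?Hct ?adj_src ?adj_tgt; typ).
  rewrite comp_idm -(adj_tgt L a b R1) tau_nat2 adj_src.
  by [].
  all: by typ; rewrite Hct; typ.
Qed.


Lemma decomp (p : seq nat) k : k.+1 < size p ->
  p = take k p ++ nth 0 p k :: nth 0 p k.+1 :: drop k.+2 p.
Proof.
move=> H.
rewrite -{1}(cat_take_drop k p) (drop_nth 0 (n:=k)) ?(drop_nth 0 (n:=k.+1)) //.
by apply: ltnW.
Qed.

Lemma adjm_dec L a b R : adjm (map X (L ++ a :: b :: R)) (size L) = adj L a b R.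
Proof.
rewrite /adjm map_cat take_size_cat ?size_map //.
rewrite !nth_cat size_map ltnn subnn ltnNge leqnSn /= subSnn /=.
have -> : map X L ++ [:: X a, X b & map X R] = (map X L ++ [:: X a; X b]) ++ map X R by rewrite -catA.
by rewrite drop_size_cat // size_cat size_map addn2.
Qed.

Lemma swapk_dec (L : seq nat) a b R : swapk (size L) (L ++ a :: b :: R) = L ++ b :: a :: R.
Proof.
rewrite /swapk take_size_cat // !nth_cat ltnn subnn ltnNge leqnSn /= subSnn /=.
have -> : L ++ [:: a, b & R] = (L ++ [:: a; b]) ++ R by rewrite -catA.
by rewrite drop_size_cat // size_cat addn2.
Qed.

Lemma coh_can K p f : coh X K p f -> f = can (iota 0 K) p /\ perm_eq (iota 0 K) p.
Proof.
elim => [|{}p {}f k H [IH1 IH2] Hk].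
  split; last exact: perm_refl.
  by rewrite can_id.
have Hs : k.+1 < size p by rewrite -(perm_size IH2) size_iota.
have [L [a [b [R [Ep HL]]]]] : exists L a b R, p = L ++ a :: b :: R /\ size L = k.
  exists (take k p), (nth 0 p k), (nth 0 p k.+1), (drop k.+2 p); split; first exact: decomp.
  by rewrite size_take (ltnW Hs).
subst p k.
rewrite swapk_dec adjm_dec; split; last first.
  apply: (perm_trans IH2); rewrite perm_cat2l.
  by rewrite -[a :: b :: R]/([:: a] ++ [:: b] ++ R) perm_catCA.
rewrite IH1 (@can_swap (iota 0 K) L a b R) //.
by rewrite -(perm_uniq IH2) iota_uniq.
Qed.


Lemma is_unitP A : reflect (A = one) (is_unit A).
Proof. rewrite /is_unit; case: excluded_middle_informative => H; by constructor. Qed.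

Definition nuX i := ~~ is_unit (X i).

Lemma obs_filter s : obs (filter nuX s) = obs s.
Proof.
elim: s => [|x s IH] //=; rewrite /nuX; case: is_unitP => H /=; rewrite obs_cons IH //.
by rewrite H tens1l.
Qed.

Lemma obs_units L : filter nuX L = [::] -> obs L = one.
Proof. by move=> H; rewrite -obs_filter H. Qed.

Lemma can_unit s t : uniq s -> perm_eq s t -> filter nuX s = filter nuX t -> can s t = idm (obs s).
Proof.
elim: s t => [|x s' IH] t Hu Hp Hf.
  by rewrite perm_sym in Hp; move/perm_nilP: Hp => ->.
have xt : x \in t by rewrite -(perm_mem Hp) mem_head.
have [L [R [Et xL]]] := split_mem xt. subst t.
have /andP [xs {}Hu] := Hu.
have Hp' := perm_pivot Hp.
rewrite can_cons //.
have [_ Hct] := can_typ Hp'.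
case Hx : (nuX x).
- have HL : filter nuX L = [::].
    move: Hf; rewrite /= Hx filter_cat /=.
    case E: (filter nuX L) => [|y l] //= [Eyx _].
    have : y \in filter nuX L by rewrite E mem_head.
    by rewrite mem_filter -Eyx (negbTE xL) andbF.
  have Hf' : filter nuX s' = filter nuX (L ++ R).
    by move: Hf; rewrite /= Hx !filter_cat /= Hx HL /= => [[]].
  rewrite IH // in Hct *.
  rewrite (obs_units HL) tau_A1 -idm_tens tensm_idm.
  rewrite tgt_idm obs_cat (obs_units HL) tens1l in Hct.
  by rewrite obs_cons Hct comp_idm.
- have Hx1 : X x = one by apply/is_unitP; move: Hx; rewrite /nuX; case: is_unit.
  have Hf' : filter nuX s' = filter nuX (L ++ R).
    by move: Hf; rewrite /= Hx !filter_cat /= Hx.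
  rewrite IH // in Hct *.
  rewrite Hx1 tau_1A tensm1l -idm_tens.
  rewrite tgt_idm in Hct.
  by rewrite -obs_cat -Hct comp_idm obs_cons Hx1 tens1l.
Qed.

Lemma coh_id K p f : coh X K p f -> filter nuX p = filter nuX (iota 0 K) -> f = idm (tup X K).
Proof.
move=> H Hf; have [-> Hp] := coh_can H.
by rewrite can_unit // iota_uniq.
Qed.


Lemma coh_exists K p : perm_eq (iota 0 K) p -> exists f, coh X K p f.
Proof.
move=> Hp.
apply: (@gen p (fun q => exists f, coh X K q f) _ (iota 0 K)) => //; last by exists (idm (tup X K)); constructor.
move=> L a b R [f Hf].
have [_ Hq] := coh_can Hf.
have Hs : (size L).+1 < K.
  by have := perm_size Hq; rewrite size_iota size_cat /= => ->; rewrite addnS ltnS -addn1 leq_add2l.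
exists (comp (adjm (map X (L ++ a :: b :: R)) (size L)) f).
rewrite -swapk_dec; exact: cohS.
Qed.


Lemma pushf_case (u : nat -> nat) i :
  (pushf u X i = one /\ forall j, u j <> i) \/ exists j, u j = i /\ pushf u X i = X j.
Proof.
rewrite /pushf; case: excluded_middle_informative => H.
  right; case: (constructive_indefinite_description _ H) => j /= Hj; by exists j.
by left; split => // j Hj; apply: H; exists j.
Qed.

Lemma pushfE (u : nat -> nat) j : injective u -> pushf u X (u j) = X j.
Proof.
move=> Hu; case: (pushf_case u (u j)) => [[_ H]|[j' [Hj ->]]].
  by case: (H j).
by rewrite (Hu _ _ Hj).
Qed.

Lemma supp_filter K K' : supp_bound X K -> K <= K' ->
  filter nuX (iota 0 K') = filter nuX (iota 0 K).
Proof.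
move=> HK HKK'.
rewrite -(subnKC HKK') iotaD filter_cat add0n.
rewrite (@eq_in_filter _ _ pred0 (iota K (K' - K))) ?filter_pred0 ?cats0 //.
move=> i; rewrite mem_iota => /andP [H _] /=; rewrite /nuX (HK _ H).
by case: is_unitP.
Qed.

Lemma tup_bound K K' : supp_bound X K -> supp_bound X K' -> tup X K = tup X K'.
Proof.
move=> H H'; rewrite /tup -/(obs (iota 0 K)) -/(obs (iota 0 K')) -obs_filter -(obs_filter (iota 0 K')).
case: (leqP K K') => HK; first by rewrite (supp_filter H HK).
by rewrite (supp_filter H' (ltnW HK)).
Qed.

Lemma bigtens_tup K : supp_bound X K -> bigtens X = tup X K.
Proof.
move=> H; rewrite /bigtens; apply: tup_bound => //.
by apply: epsilon_spec; exists K.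
Qed.


Lemma nuXP j : reflect (X j <> one) (nuX j).
Proof. by rewrite /nuX; case: is_unitP => H; constructor. Qed.

Lemma bracket1_id (u : nat -> nat) : injective u ->
  (forall j j', j < j' -> nuX j -> nuX j' -> u j < u j') -> finsupp X ->
  bracket1 u X = idm (bigtens X).
Proof.
move=> Hu Hm [K0 HK0].
have Hex : exists f, exists K (p : seq nat),
    (forall i, K <= i -> X i = one /\ pushf u X i = one) /\
    (forall j, j < K -> X j <> one -> u j < K /\ nth 0 p (u j) = j) /\
    coh X K p f.
  pose K := maxn K0 (\max_(j < K0) (u j).+1).
  have uK : forall j, j < K0 -> u j < K.
    move=> j Hj; rewrite leq_max; apply/orP; right.
    exact: (@leq_bigmax_cond _ _ (fun j : 'I_K0 => (u j).+1) (Ordinal Hj)).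
  have jK0 : forall j, X j <> one -> j < K0.
    by move=> j Hj; rewrite ltnNge; apply/negP => /HK0.
  have [p [Hp Hnth]] := @p_construct K nuX u Hu (fun j _ Hj => uK j (jK0 j (elimT (nuXP j) Hj))).
  have [f Hf] := coh_exists Hp.
  exists f, K, p; split; [|split] => //.
  - move=> i Hi; have HiK0 : K0 <= i by apply: leq_trans Hi; rewrite leq_max leqnn.
    split; first exact: HK0.
    case: (pushf_case u i) => [[->]|[j [Hj ->]]] //.
    case: (leqP K0 j) => Hj0; first exact: HK0.
    by move: (uK j Hj0); rewrite Hj ltnNge Hi.
  - move=> j Hj Hxj; split; first exact: uK (jK0 _ Hxj).
    by apply: Hnth => //; apply/nuXP.
have := epsilon_spec (inhabits (idm one)) _ Hex.
move=> [K [p [H1 [H2 H3]]]].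
rewrite /bracket1.
rewrite (coh_id H3).
  by rewrite (bigtens_tup (K:=K)) // => i /H1 [].
have [_ Hp] := coh_can H3.
have Hsp : size p = K by rewrite -(perm_size Hp) size_iota.
have Hup : uniq p by rewrite -(perm_uniq Hp) iota_uniq.
set S' := filter nuX (iota 0 K).
have Hpos : filter (fun i => nuX (nth 0 p i)) (iota 0 K) = map u S'.
  apply: sorted_charac.
    apply: (@homo_sorted_in _ _ nuX u ltn ltn).
    - by move=> x y Hx Hy Hxy; apply: Hm.
    - exact: filter_all.
    - by apply: sorted_filter => //; [exact: ltn_trans | exact: iota_ltn_sorted].
  move=> i; apply/idP/idP.
    move=> /mapP [j]; rewrite mem_filter mem_iota add0n => /andP [Hj Hj2] ->.
    have [Hu1 Hu2] := H2 j Hj2 (elimT (nuXP j) Hj).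
    by rewrite Hu1 Hu2.
  move=> /andP [Hi Hni].
  set j := nth 0 p i in Hni.
  have jp : j \in p by apply: mem_nth; rewrite Hsp.
  have jK : j < K by rewrite -(perm_mem Hp) mem_iota in jp.
  have [Hu1 Hu2] := H2 j jK (elimT (nuXP j) Hni).
  have Ei : i = u j.
    apply/eqP; rewrite -(nth_uniq 0 (s:=p)) ?Hsp //.
    by rewrite Hu2.
  by rewrite Ei map_f // mem_filter Hni mem_iota.
rewrite -{1}(take_oversize (leqnn (size p))) -(map_nth_iota0 0) // filter_map Hsp.
rewrite (_ : [seq i <- iota 0 K | preim (nth 0 p) nuX i] = map u S'); last by rewrite -Hpos.
rewrite -map_comp -{2}(map_id S'); apply/eq_in_map => j.
rewrite mem_filter mem_iota add0n => /andP [Hnj Hj] /=.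
by have [_ ->] := H2 j Hj (elimT (nuXP j) Hnj).
Qed.


Lemma pushf_bound (u : nat -> nat) K0 : injective u -> supp_bound X K0 ->
  supp_bound (pushf u X) (\max_(j < K0) (u j).+1).
Proof.
move=> Hu HK0 i Hi.
case: (pushf_case u i) => [[-> _]|[j [Hj ->]]] //.
case: (leqP K0 j) => Hj0; first exact: HK0.
have : (u j).+1 <= \max_(j < K0) (u j).+1.
  exact: (@leq_bigmax_cond _ _ (fun j : 'I_K0 => (u j).+1) (Ordinal Hj0)).
by move=> H; have := leq_trans H Hi; rewrite Hj ltnn.
Qed.

End Cat.

Section Cat2.
Variable C : permcat.
Local Notation one := (unit C).
Variable X : nat -> Ob C.
Lemma bigtens_push (u : nat -> nat) : injective u ->
  (forall j j', j < j' -> nuX X j -> nuX X j' -> u j < u j') -> finsupp X ->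
  bigtens (pushf u X) = bigtens X.
Proof.
move=> Hu Hm [K0 HK0].
have HK := pushf_bound Hu HK0; set K := \max_(j < K0) (u j).+1 in HK.
rewrite (bigtens_tup HK0) (@bigtens_tup _ (pushf u X) K) //.
set S := filter (nuX X) (iota 0 K0).
have E : filter (nuX (pushf u X)) (iota 0 K) = map u S.
  apply: sorted_charac.
    apply: (@homo_sorted_in _ _ (nuX X) u ltn ltn).
    - by move=> x y Hx Hy Hxy; apply: Hm.
    - exact: filter_all.
    - by apply: sorted_filter => //; [exact: ltn_trans | exact: iota_ltn_sorted].
  move=> i; apply/idP/idP.
    move=> /mapP [j]; rewrite mem_filter mem_iota add0n => /andP [Hj Hj2] ->.
    rewrite /nuX pushfE // -/(nuX X j) Hj andbT ltnNge; apply/negP => /HK.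
    by rewrite pushfE // => Hx; move: Hj; rewrite /nuX Hx; case: is_unitP.
  move=> /andP [Hi Hni]; rewrite /nuX in Hni.
  case: (pushf_case X u i) Hni => [[-> _]|[j [Hj ->]]].
    by rewrite /nuX; case: is_unitP.
  move=> Hnj; rewrite -Hj map_f // mem_filter mem_iota add0n /=; apply/andP; split => //.
  by rewrite ltnNge; apply/negP => /HK0 Hx; move: Hnj; rewrite /nuX Hx; case: is_unitP.
rewrite /tup -/(obs (pushf u X) (iota 0 K)) -/(obs X (iota 0 K0)).
rewrite -obs_filter -(obs_filter X) E -/S /obs -map_comp.
by congr tensl; apply: eq_map => j /=; rewrite pushfE.
Qed.

End Cat2.

Lemma filter_filterC (a : pred nat) s : filter a (filter (predC a) s) = [::].
Proof. by elim: s => //= x s IH; case E: (a x) => /=; rewrite ?E ?IH. Qed.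

Section Fam.
Variable C : permcat.
Local Notation one := (unit C).
Variables (m : nat) (Xs : 'I_m -> nat -> Ob C).
Hypothesis HX : forall a, finsupp (Xs a).
Variable phi : 'I_m * nat -> nat.
Hypothesis Hinj : injective phi.
Hypothesis Hmon : monotone Xs phi.

Definition Zs a := pushf (fun j => phi (a, j)) (Xs a).
Local Notation F := (famsum Zs).

Lemma u_inj a : injective (fun j => phi (a, j)).
Proof. by move=> j j' /Hinj []. Qed.

Lemma u_mon a j j' : j < j' -> nuX (Xs a) j -> nuX (Xs a) j' -> phi (a, j) < phi (a, j').
Proof.
move=> Hj /nuXP H1 /nuXP H2; apply: (Hmon (x:=(a,j)) (y:=(a,j'))) => //.
by rewrite /lex_lt /= eqxx Hj orbT.
Qed.

Lemma Zs_nu a i : nuX (Zs a) i -> exists j, phi (a, j) = i /\ nuX (Xs a) j.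
Proof.
rewrite /nuX /Zs; case: (pushf_case (Xs a) (fun j => phi (a, j)) i) => [[-> _]|[j [Hj ->]]].
  by case: is_unitP.
by move=> H; exists j.
Qed.

Lemma Zs_disj a b i : nuX (Zs a) i -> nuX (Zs b) i -> a = b.
Proof.
move=> /Zs_nu [j [Hj _]] /Zs_nu [j' [Hj' _]].
by have [] := Hinj (etrans Hj (esym Hj')).
Qed.

Lemma F_eq a i : nuX (Zs a) i -> F i = Zs a i.
Proof.
move=> Ha; rewrite /famsum; case: excluded_middle_informative => H.
  case: (constructive_indefinite_description _ H) => b /= Hb.
  by rewrite (Zs_disj Ha (introT (nuXP _ _) Hb)).
by exfalso; apply: H; exists a; apply/nuXP.
Qed.

Lemma F_one i : (forall a, ~~ nuX (Zs a) i) -> F i = one.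
Proof.
move=> Ha; rewrite /famsum; case: excluded_middle_informative => // - [a Hb].
by move: (Ha a) => /nuXP; rewrite /Zs.
Qed.

Lemma nuF i : nuX F i = [exists a, nuX (Zs a) i].
Proof.
case: existsP => [[a Ha]|H]; first by have E := F_eq Ha; move: Ha; rewrite /nuX E.
rewrite /nuX F_one; first by case: is_unitP.
by move=> a; apply/negP => Ha; apply: H; exists a.
Qed.

Definition bnd K := forall a i, K <= i -> Zs a i = one.

Lemma common_bound : exists K, bnd K.
Proof.
have [Kf HKf] := fin_all_exists HX.
exists (\max_a \max_(j < Kf a) (phi (a, (j : nat))).+1) => a i Hi.
have := pushf_bound (@u_inj a) (HKf a); apply.
apply: leq_trans Hi.
exact: (@leq_bigmax_cond _ _ (fun a => \max_(j < Kf a) (phi (a, (j : nat))).+1) a).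
Qed.

Lemma F_bound K : bnd K -> supp_bound F K.
Proof.
move=> HK i Hi; apply: F_one => a; rewrite /nuX HK //.
by case: is_unitP.
Qed.


Lemma enum_pairwise : pairwise (fun a b : 'I_m => a < b) (enum 'I_m).
Proof.
have := iota_ltn_sorted 0 m; rewrite -val_enum_ord sorted_pairwise; last exact: ltn_trans.
by rewrite pairwise_map.
Qed.

Lemma blocks_eq K : bnd K ->
  flatten [seq [seq i <- iota 0 K | ~~ is_unit (Zs a i)] | a <- enum 'I_m] = filter (nuX F) (iota 0 K).
Proof.
move=> HK; symmetry; apply: sorted_charac.
  rewrite sorted_pairwise; last exact: ltn_trans.
  elim: (enum 'I_m) enum_pairwise => [|a l IH] //= /andP [Hal Hl].
  rewrite pairwise_cat IH // andbT; apply/andP; split.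
    apply/allrelP => x y; rewrite mem_filter => /andP [Hx _] /flatten_mapP [b Hb].
    rewrite mem_filter => /andP [Hy _].
    have [j [<- Hj]] := Zs_nu Hx; have [j' [<- Hj']] := Zs_nu Hy.
    apply: (Hmon (x:=(a,j)) (y:=(b,j'))); try by apply/nuXP.
    by rewrite /lex_lt /= (allP Hal b Hb).
  rewrite -sorted_pairwise; last exact: ltn_trans.
  by apply: sorted_filter => //; [exact: ltn_trans | exact: iota_ltn_sorted].
move=> i; apply/flatten_mapP/andP.
  move=> [a _]; rewrite mem_filter mem_iota add0n => /andP [Ha Hi]; split => //.
  by rewrite nuF; apply/existsP; exists a.
move=> [Hi]; rewrite nuF => /existsP [a Ha]; exists a; first by rewrite mem_enum.
by rewrite mem_filter mem_iota add0n Hi -/(nuX (Zs a) i) Ha.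
Qed.

Lemma sum_perm_eq K : bnd K ->
  sum_perm Zs K = filter (nuX F) (iota 0 K) ++ filter (predC (nuX F)) (iota 0 K).
Proof.
move=> HK; rewrite /sum_perm blocks_eq //; congr (_ ++ _).
apply: eq_filter => i; rewrite /= nuF negb_exists; apply: eq_forallb => a.
by rewrite /nuX negbK.
Qed.

Lemma rho_id : rho Zs = idm (bigtens F).
Proof.
have Hex : exists f, exists K, (forall a i, K <= i -> Zs a i = one) /\ coh F K (sum_perm Zs K) f.
  have [K HK] := common_bound.
  have Hp : perm_eq (iota 0 K) (sum_perm Zs K) by rewrite sum_perm_eq // perm_sym perm_filterC.
  have [f Hf] := coh_exists F Hp.
  by exists f, K.
have := epsilon_spec (inhabits (idm one)) _ Hex.
move=> [K [HK Hc]].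
rewrite /rho (coh_id Hc).
  by rewrite (bigtens_tup (F_bound HK)).
by rewrite sum_perm_eq // filter_cat filter_id filter_filterC cats0.
Qed.

Lemma obs_flatten (X : nat -> Ob C) (g : 'I_m -> seq nat) l :
  obs X (flatten (map g l)) = foldr (fun a acc => tens (obs X (g a)) acc) one l.
Proof. by elim: l => [|a l IH] //=; rewrite obs_cat IH. Qed.

Lemma bigtens_F : bigtens F = foldr (fun a acc => tens (bigtens (Xs a)) acc) one (enum 'I_m).
Proof.
have [K HK] := common_bound.
rewrite (bigtens_tup (F_bound HK)) /tup -/(obs F (iota 0 K)) -obs_filter -blocks_eq // obs_flatten.
elim: (enum 'I_m) => [|a l IH] //=; rewrite IH; congr tens.
have -> : obs F [seq i <- iota 0 K | ~~ is_unit (Zs a i)] = obs (Zs a) [seq i <- iota 0 K | ~~ is_unit (Zs a i)].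
  rewrite /obs; congr tensl; apply/eq_in_map => i; rewrite mem_filter => /andP [Hi _].
  exact: F_eq.
rewrite -/(filter (nuX (Zs a)) (iota 0 K)) obs_filter.
rewrite /obs -/(tup (Zs a) K) -(bigtens_tup (K:=K)); last by move=> i; apply: HK.
exact: bigtens_push (@u_inj a) (@u_mon a) (HX a).
Qed.

End Fam.

Lemma divmod_inj d q q' x y : x < d -> y < d -> q * d + x = q' * d + y -> q = q' /\ x = y.
Proof.
move=> Hx Hy E.
have Exy : x = y by have := congr1 (modn^~ d) E; rewrite /= !modnMDl !modn_small.
subst y; split => //; move/addIn: E => /eqP; rewrite eqn_mul2r; case/orP => [/eqP d0|/eqP //].
by rewrite d0 in Hx.
Qed.

Lemma inv_idm (C : permcat) (A : Ob C) :
  Defs.comp (Defs.inv (idm A)) (idm A) = idm A /\ Defs.comp (idm A) (Defs.inv (idm A)) = idm A.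
Proof.
have := epsilon_spec (inhabits (idm A))
  (fun g => Defs.comp g (idm A) = idm (src (idm A)) /\ Defs.comp (idm A) g = idm (tgt (idm A))).
rewrite /Defs.inv src_idm tgt_idm; apply.
by exists (idm A); rewrite comp_idm.
Qed.

Theorem proposition2p12 (C : permcat) (m : nat) (Xs : 'I_m -> nat -> Ob C)
  (HX : forall a, finsupp (Xs a)) :
  (exists phi : 'I_m * nat -> nat, injective phi /\ monotone Xs phi) /\
  (forall phi phi' : 'I_m * nat -> nat,
     injective phi -> monotone Xs phi ->
     injective phi' -> monotone Xs phi' ->
     bigtens (phipush phi Xs) = bigtens (phipush phi' Xs) /\
     bracket_fam phi' phi Xs = idm (bigtens (phipush phi Xs))).
Proof.
split.
- have [Kf HKf] := fin_all_exists HX.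
  pose K := \max_a Kf a.
  have HK : forall a i, K <= i -> Xs a i = unit C.
    move=> a i Hi; apply: HKf; apply: leq_trans Hi; exact: leq_bigmax.
  exists (fun x : 'I_m * nat => if x.2 < K then x.1 * K + x.2 else m * K + (x.2 * m + x.1)); split.
  + move=> [a j] [b j'] /=.
    have am := ltn_ord a; have bm := ltn_ord b.
    case: ifP => Hj; case: ifP => Hj' E.
    * have [E1 E2] := divmod_inj Hj Hj' E.
      by congr pair => //; apply: val_inj.
    * have : a * K + j < m * K + (j' * m + b) by nia.
      by rewrite E ltnn.
    * have : b * K + j' < m * K + (j * m + a) by nia.
      by rewrite E ltnn.
    * move/addnI: E => E.
      have [E1 E2] := divmod_inj am bm E.
      by congr pair => //; apply: val_inj.
  + move=> [a j] [b j'] /= Hlt H1 H2.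
    have Hj : j < K by rewrite ltnNge; apply/negP => /(HK a) H; apply: H1.
    have Hj' : j' < K by rewrite ltnNge; apply/negP => /(HK b) H; apply: H2.
    rewrite Hj Hj'.
    rewrite /lex_lt /= in Hlt.
    case/orP: Hlt => [Hab|/andP [/eqP Hab Hjj]].
      by nia.
    by rewrite Hab ltn_add2l.
- move=> phi phi' Hi Hm Hi' Hm'.
  have E1 : bigtens (phipush phi Xs) = foldr (fun a acc => tens (bigtens (Xs a)) acc) (unit C) (enum 'I_m).
    exact: (bigtens_F HX Hi Hm).
  have E2 : bigtens (phipush phi' Xs) = foldr (fun a acc => tens (bigtens (Xs a)) acc) (unit C) (enum 'I_m).
    exact: (bigtens_F HX Hi' Hm').
  split; first by rewrite E1 E2.
  have R1 : rho (fun a => pushf (fun j => phi (a, j)) (Xs a)) = idm (bigtens (phipush phi Xs)).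
    exact: (rho_id HX Hi Hm).
  have R2 : rho (fun a => pushf (fun j => phi' (a, j)) (Xs a)) = idm (bigtens (phipush phi' Xs)).
    exact: (rho_id HX Hi' Hm').
  have Hfs : tensfam (fun a => bracket (fun j => phi' (a, j)) (fun j => phi (a, j)) (Xs a))
      = idm (foldr (fun a acc => tens (bigtens (Xs a)) acc) (unit C) (enum 'I_m)).
    rewrite /tensfam; elim: (enum 'I_m) => [|a l IH] //=.
    rewrite IH /bracket (bracket1_id (@u_inj _ _ Hi a) (@u_mon _ _ _ _ Hm a) (HX a)).
    rewrite (bracket1_id (@u_inj _ _ Hi' a) (@u_mon _ _ _ _ Hm' a) (HX a)).
    by have [_ ->] := inv_idm (bigtens (Xs a)); rewrite tensm_idm.
  rewrite /bracket_fam /summor R1 R2 Hfs E1 E2 comp_idm.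
  by have [-> _] := inv_idm (foldr (fun a acc => tens (bigtens (Xs a)) acc) (unit C) (enum 'I_m)).
Qed.
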